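(* Let $\mathcal A$ be a Banach algebra. The following are equivalent: (i) $\mathcal A$ is amenable. (ii) For every Banach algebra $\mathcal B$ and every continuous homomorphism $\varphi:\mathcal A\to\mathcal B$, $H^1(\mathcal A,\mathcal B_\varphi^* )=\{0\}$. (iii) For every Banach algebra $\mathcal B$ and every injective continuous homomorphism $\varphi:\mathcal A\to\mathcal B$, $H^1(\mathcal A,\mathcal B_\varphi^* )=\{0\}$. (iv) For every Banach algebra $\mathcal B$ and every injective continuous homomorphism $\varphi:\mathcal A\to\mathcal B$, every bounded derivation $d:\mathcal A\to\mathcal B_\varphi^*$ satisfying $\langle d(a),\varphi(b)\rangle+\langle d(b),\varphi(a)\rangle=0$ for all $a,b\in\mathcal A$ is inner. (v) For every Banach algebra $\mathcal B$ and every injective continuous homomorphism $\varphi:\mathcal A\to\mathcal B$, $H^1(\mathcal A,\mathcal B_\varphi^{**})=\{0\}$.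
   Context: For a Banach $\mathcal A$-bimodule $X$, the dual $X^*$ is a Banach $\mathcal A$-bimodule via $\langle x,a\cdot x^*\rangle=\langle x\cdot a,x^*\rangle$ and $\langle x,x^*\cdot a\rangle=\langle a\cdot x,x^*\rangle$; iterating gives the bimodule $X^{**}$. For a continuous homomorphism $\varphi:\mathcal A\to\mathcal B$ of Banach algebras, $\mathcal B_\varphi$ denotes $\mathcal B$ regarded as a Banach $\mathcal A$-bimodule with $a\cdot b=\varphi(a)b$, $b\cdot a=b\varphi(a)$. A derivation $D:\mathcal A\to X$ is a bounded linear map with $D(ab)=D(a)\cdot b+a\cdot D(b)$; it is inner if $D(a)=a\cdot x-x\cdot a$ for some $x\in X$. $H^1(\mathcal A,X)$ is the space of derivations modulo inner derivations. $\mathcal A$ is amenable if $H^1(\mathcal A,X^* )=\{0\}$ for every Banach $\mathcal A$-bimodule $X$. *)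

(* Defs.v *)
(* Complex Banach spaces are modelled as
   [completeNormedModType R[i]] for an arbitrary [R : realType]
   ([R[i]] = complex numbers over R, from mathcomp-real-closed). *)
From mathcomp Require Import all_boot all_algebra.
From mathcomp Require Import all_classical all_reals all_analysis.
From mathcomp Require Import complex.
Import numFieldNormedType.Exports.
Set Implicit Arguments. Unset Strict Implicit. Unset Printing Implicit Defensive.
Local Open Scope ring_scope.

Section BanachDefs.
Variable R : realType.
Local Notation K := (R[i]).

Definition lin (V W : lmodType K) (f : V -> W) : Prop :=
  forall (k : K) (u v : V), f (k *: u + v) = k *: f u + f v.

Definition bilin (U V W : lmodType K) (m : U -> V -> W) : Prop :=
  (forall u, lin (m u)) /\ (forall v, lin (fun u => m u v)).

Definition banach_algebra (A : completeNormedModType K) (mul : A -> A -> A) : Prop :=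
  [/\ bilin mul, associative mul & forall x y, `|mul x y| <= `|x| * `|y| ].

Definition cont_hom (A B : completeNormedModType K)
  (mulA : A -> A -> A) (mulB : B -> B -> B) (phi : A -> B) : Prop :=
  [/\ lin phi, (forall a b, phi (mulA a b) = mulB (phi a) (phi b)) & continuous phi].

(* Banach A-bimodule: left action [l a x = a . x], right action [r x a = x . a] *)
Definition banach_bimodule (A : completeNormedModType K) (mulA : A -> A -> A)
  (X : completeNormedModType K) (l : A -> X -> X) (r : X -> A -> X) : Prop :=
  [/\ bilin l /\ bilin (fun a x => r x a),
      (forall a b x, l (mulA a b) x = l a (l b x)),
      (forall a b x, r x (mulA a b) = r (r x a) b),
      (forall a b x, r (l a x) b = l a (r x b)) &
      exists C : R, forall a x,
        `|l a x| <= (C%:C)%C * `|a| * `|x| /\ `|r x a| <= (C%:C)%C * `|a| * `|x| ].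

Definition bounded_functional (X : normedModType K) (f : X -> K) : Prop :=
  lin f /\ exists M : R, forall x, `|f x| <= (M%:C)%C * `|x|.

Section Dual.
Variables (A : completeNormedModType K) (mulA : A -> A -> A).
Variables (X : completeNormedModType K) (l : A -> X -> X) (r : X -> A -> X).

(* A bounded derivation D : A -> X^{*}, written as D a x = <x, D a>.
   Dual module: <x, a.f> = <x.a, f>, <x, f.a> = <a.x, f>. *)
Definition dual_derivation (D : A -> X -> K) : Prop :=
  [/\ (forall a, lin (D a)),
      (forall (k : K) a b x, D (k *: a + b) x = k * D a x + D b x),
      (exists C : R, forall a x, `|D a x| <= (C%:C)%C * `|a| * `|x|) &
      (* D(ab) = D(a).b + a.D(b) *)
      forall a b x, D (mulA a b) x = D a (l b x) + D b (r x a) ].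

(* D is inner: D a = a.f - f.a for some f in X^{*} *)
Definition dual_inner (D : A -> X -> K) : Prop :=
  exists f : X -> K, bounded_functional f /\
    forall a x, D a x = f (r x a) - f (l a x).

Definition H1_dual_trivial : Prop :=
  forall D, dual_derivation D -> dual_inner D.

(* Elements of X^{**} are represented as functions F : (X -> K) -> K, only
   their values on bounded linear functionals being relevant.
   Bidual module: <f, a.F> = <f.a, F>, <f, F.a> = <a.f, F>,
   where (f.a)(x) = f(a.x), (a.f)(x) = f(x.a). *)
Definition bidual_elem (F : (X -> K) -> K) : Prop :=
  (forall (k : K) f g, bounded_functional f -> bounded_functional g ->
     F (fun x => k * f x + g x) = k * F f + F g) /\
  exists C : R, forall (f : X -> K) (M : R), lin f -> 0 <= M ->
     (forall x, `|f x| <= (M%:C)%C * `|x|) -> `|F f| <= (C%:C)%C * (M%:C)%C.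

Definition bidual_derivation (D : A -> (X -> K) -> K) : Prop :=
  [/\ (forall a, bidual_elem (D a)),
      (forall (k : K) a b f, bounded_functional f ->
          D (k *: a + b) f = k * D a f + D b f),
      (exists C : R, forall a (f : X -> K) (M : R), lin f -> 0 <= M ->
          (forall x, `|f x| <= (M%:C)%C * `|x|) -> `|D a f| <= (C%:C)%C * `|a| * (M%:C)%C) &
      (* D(ab) = D(a).b + a.D(b) *)
      forall a b f, bounded_functional f ->
        D (mulA a b) f = D a (fun x => f (r x b)) + D b (fun x => f (l a x)) ].

(* D is inner: D a = a.F - F.a for some F in X^{**} *)
Definition bidual_inner (D : A -> (X -> K) -> K) : Prop :=
  exists F : (X -> K) -> K, bidual_elem F /\
    forall a f, bounded_functional f ->
      D a f = F (fun x => f (l a x)) - F (fun x => f (r x a)).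

Definition H1_bidual_trivial : Prop :=
  forall D, bidual_derivation D -> bidual_inner D.

End Dual.

Definition amenable (A : completeNormedModType K) (mulA : A -> A -> A) : Prop :=
  forall (X : completeNormedModType K) (l : A -> X -> X) (r : X -> A -> X),
    banach_bimodule mulA l r -> H1_dual_trivial mulA l r.

Definition lact_phi (A B : completeNormedModType K) (mulB : B -> B -> B)
  (phi : A -> B) : A -> B -> B := fun a b => mulB (phi a) b.
Definition ract_phi (A B : completeNormedModType K) (mulB : B -> B -> B)
  (phi : A -> B) : B -> A -> B := fun b a => mulB b (phi a).

End BanachDefs.

(* Main.v *)
Require Import Defs.
From HB Require Import structures.
From mathcomp Require Import all_boot all_order all_algebra.
From mathcomp Require Import all_classical all_reals all_analysis.
From mathcomp Require Import complex.
From mathcomp Require Import ring lra.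
Import numFieldNormedType.Exports.
Import Order.TTheory GRing.Theory Num.Theory.
Set Implicit Arguments. Unset Strict Implicit. Unset Printing Implicit Defensive.
Local Open Scope ring_scope.
Local Open Scope classical_set_scope.

Section Helpers.
Variable R : realType.
Local Notation K := (R[i]).

Lemma ge0_Re (z : K) : 0 <= z -> z = ((complex.Re z)%:C)%C.
Proof. by move=> z0; rewrite [LHS]complexE (ger0_Im z0) mulr0 addr0. Qed.

Lemma Re_ge0 (z : K) : 0 <= z -> 0 <= complex.Re z.
Proof. by move=> z0; rewrite -ler0c -ge0_Re. Qed.

Lemma realCD (a b : R) : ((a + b)%:C)%C = (a%:C)%C + (b%:C)%C :> K.
Proof. exact: rmorphD. Qed.
Lemma realCM (a b : R) : ((a * b)%:C)%C = (a%:C)%C * (b%:C)%C :> K.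
Proof. exact: rmorphM. Qed.
Lemma realCV (a : R) : ((a^-1)%:C)%C = ((a%:C)%C)^-1 :> K.
Proof. exact: fmorphV. Qed.
Lemma realCN (a : R) : ((- a)%:C)%C = - (a%:C)%C :> K.
Proof. exact: rmorphN. Qed.
Lemma realC0 : ((0 : R)%:C)%C = 0 :> K.
Proof. by []. Qed.
Lemma realC1 : ((1 : R)%:C)%C = 1 :> K.
Proof. by []. Qed.

Lemma Re_le_norm (z : K) : `|complex.Re z| <= complex.Re `|z|.
Proof.
rewrite normc_def /= -sqrtr_sqr ler_sqrt ?addr_ge0 ?sqr_ge0 //.
by rewrite lerDl sqr_ge0.
Qed.

Lemma Im_le_norm (z : K) : `|complex.Im z| <= complex.Re `|z|.
Proof.
rewrite normc_def /= -sqrtr_sqr ler_sqrt ?addr_ge0 ?sqr_ge0 //.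
by rewrite lerDr sqr_ge0.
Qed.

Lemma norm_ReIm (a b : R) : `|(a +i* b)%C| <= ((`|a| + `|b|)%:C)%C.
Proof.
rewrite normc_def lecR /=.
have h : `|a| + `|b| = Num.sqrt ((`|a| + `|b|) ^+ 2).
  by rewrite sqrtr_sqr; apply/esym/ger0_norm; apply: addr_ge0.
rewrite [X in _ <= X]h ler_sqrt; last by rewrite sqr_ge0.
rewrite sqrrD !real_normK ?num_real //.
by rewrite -addrA lerD2l lerDr mulrn_wge0 // mulr_ge0.
Qed.

Lemma ReB (z w : K) : complex.Re (z - w) = complex.Re z - complex.Re w.
Proof. by case: z; case: w. Qed.
Lemma ImB (z w : K) : complex.Im (z - w) = complex.Im z - complex.Im w.
Proof. by case: z; case: w. Qed.
Lemma ReImB (z : K) (a b : R) : (z - (a +i* b)%C) = ((complex.Re z - a) +i* (complex.Im z - b))%C.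
Proof. by case: z. Qed.

Lemma realC_ge0 (a : R) : 0 <= a -> 0 <= ((a%:C)%C : K).
Proof. by rewrite ler0c. Qed.

Section Lin.
Variables (V W : lmodType K) (f : V -> W) (hf : lin f).
Lemma lin0 : f 0 = 0.
Proof.
have h := hf 1 0 0; rewrite !scale1r addr0 in h.
by apply/eqP; rewrite -(subrr (f 0)) {2}h addrK.
Qed.
Lemma linD u v : f (u + v) = f u + f v.
Proof. by have := hf 1 u v; rewrite !scale1r. Qed.
Lemma linZ k u : f (k *: u) = k *: f u.
Proof. by have := hf k u 0; rewrite !addr0 lin0 addr0. Qed.
Lemma linN u : f (- u) = - f u.
Proof. by rewrite -scaleN1r linZ scaleN1r. Qed.
Lemma linB u v : f (u - v) = f u - f v.
Proof. by rewrite linD linN. Qed.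
End Lin.

Lemma lin_comp (U V W : lmodType K) (f : V -> W) (g : U -> V) :
  lin f -> lin g -> lin (f \o g).
Proof. by move=> hf hg k u v /=; rewrite hg hf. Qed.

End Helpers.

Section Bnd.
Variable R : realType.
Local Notation K := (R[i]).

Lemma cont_bound (V W : normedModType K) (f : V -> W) : lin f -> continuous f ->
  exists C : R, 0 <= C /\ forall x, `|f x| <= (C%:C)%C * `|x|.
Proof.
move=> hf cf.
pose fL : {linear V -> W} := HB.pack f (GRing.isLinear.Build _ _ _ _ f hf).
have := @continuous_linear_bounded K V W 0 fL (cf 0).
move/linear_boundedP => /pinfty_ex_gt0 [r r0 Br].
exists (complex.Re r); split; first by apply: Re_ge0; exact: ltW.
move=> x; rewrite -ge0_Re; [exact: Br | exact: ltW].
Qed.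

Lemma Bphi_bimodule (A B : completeNormedModType K) mulA mulB (phi : A -> B) :
  banach_algebra mulB -> cont_hom mulA mulB phi ->
  banach_bimodule mulA (lact_phi mulB phi) (ract_phi mulB phi).
Proof.
move=> [[lB rB] assB nB] [hphi mphi cphi].
have [C [C0 hC]] := cont_bound hphi cphi.
rewrite /lact_phi /ract_phi; split.
- split; split.
  + by move=> a; exact: lB.
  + by move=> b; exact: (lin_comp (rB b) hphi).
  + by move=> a; exact: (rB (phi a)).
  + by move=> x; exact: (lin_comp (lB x) hphi).
- by move=> a b x; rewrite mphi assB.
- by move=> a b x; rewrite mphi assB.
- by move=> a b x; rewrite assB.
- exists C => a x; split.
  + apply: (le_trans (nB _ _)); by apply: ler_wpM2r => //; exact: hC.
  + apply: (le_trans (nB _ _)); rewrite [X in X <= _]mulrC. by apply: ler_wpM2r => //; exact: hC.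
Qed.
End Bnd.

Section DualT.
Variable R : realType.
Local Notation K := (R[i]).
Variable X : normedModType K.

Record dualT := DualT { dv : X -> K ; dvP : bounded_functional dv }.

Lemma dual_ext (f g : dualT) : dv f = dv g -> f = g.
Proof.
case: f g => f fP [g gP] /= fg; subst g; congr DualT; exact: Prop_irrelevance.
Qed.

HB.instance Definition _ := gen_eqMixin dualT.
HB.instance Definition _ := gen_choiceMixin dualT.

Lemma normE (V : normedModType K) (x : V) : `|x| = ((complex.Re `|x|)%:C)%C.
Proof. by apply: ge0_Re. Qed.

Lemma normKE (x : K) : `|x| = ((complex.Re `|x|)%:C)%C.
Proof. by apply: ge0_Re. Qed.

Lemma bf0 : bounded_functional (fun _ : X => (0 : K)).
Proof.
split; first by move=> k u v; rewrite scaler0 addr0.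
by exists 0 => x; rewrite normr0 mul0r.
Qed.

Lemma bfD (f g : X -> K) : bounded_functional f -> bounded_functional g ->
  bounded_functional (fun x => f x + g x).
Proof.
move=> [lf [M hM]] [lg [N hN]]; split.
  move=> k u v; rewrite lf lg.
  have -> : forall a b c d : K, k *: (a + b) + (c + d) = (k *: a + c) + (k *: b + d).
    move=> a b c d; rewrite scalerDr -!addrA; congr (_ + _); rewrite addrCA; by [].
  by [].
exists (M + N) => x; rewrite realCD mulrDl.
by apply: (le_trans (ler_normD _ _)); apply: lerD.
Qed.

Lemma bfN (f : X -> K) : bounded_functional f -> bounded_functional (fun x => - f x).
Proof.
move=> [lf [M hM]]; split.
  by move=> k u v; rewrite lf opprD scalerN.
by exists M => x; rewrite normrN.
Qed.

Lemma bfZ (k : K) (f : X -> K) : bounded_functional f ->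
  bounded_functional (fun x => k * f x).
Proof.
move=> [lf [M hM]]; split.
  move=> a u v; rewrite lf mulrDr; congr (_ + _).
  by rewrite /GRing.scale /= mulrCA.
exists (complex.Re `|k| * M) => x; rewrite normrM realCM -normKE -mulrA.
by apply: ler_wpM2l => //; exact: hM.
Qed.

Definition dzero := DualT bf0.
Definition dadd f g := DualT (bfD (dvP f) (dvP g)).
Definition dopp f := DualT (bfN (dvP f)).
Definition dscale k f := DualT (bfZ k (dvP f)).

Lemma daddA : associative dadd.
Proof. by move=> f g h; apply: dual_ext; apply/funext => x /=; rewrite addrA. Qed.
Lemma daddC : commutative dadd.
Proof. by move=> f g; apply: dual_ext; apply/funext => x /=; rewrite addrC. Qed.
Lemma dadd0 : left_id dzero dadd.
Proof. by move=> f; apply: dual_ext; apply/funext => x /=; rewrite add0r. Qed.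
Lemma daddN : left_inverse dzero dopp dadd.
Proof. by move=> f; apply: dual_ext; apply/funext => x /=; rewrite addNr. Qed.

HB.instance Definition _ := GRing.isZmodule.Build dualT daddA daddC dadd0 daddN.

Lemma dscaleA a b v : dscale a (dscale b v) = dscale (a * b) v.
Proof. by apply: dual_ext; apply/funext => x /=; rewrite mulrA. Qed.
Lemma dscale1 : left_id 1 dscale.
Proof. by move=> f; apply: dual_ext; apply/funext => x /=; rewrite mul1r. Qed.
Lemma dscaleDr : right_distributive dscale +%R.
Proof. by move=> k f g; apply: dual_ext; apply/funext => x /=; rewrite mulrDr. Qed.
Lemma dscaleDl v : {morph dscale^~ v: a b / a + b}.
Proof. by move=> a b; apply: dual_ext; apply/funext => x /=; rewrite mulrDl. Qed.

HB.instance Definition _ := GRing.Zmodule_isLmodule.Build K dualT dscaleA dscale1 dscaleDr dscaleDl.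


Definition dset (f : X -> K) :=
  fun M : R => 0 <= M /\ forall x, `|f x| <= (M%:C)%C * `|x|.

Lemma dset_ne (f : dualT) : dset (dv f) !=set0.
Proof.
case: (dvP f) => _ [M hM]; exists (Num.max M 0); split; first by rewrite le_max lexx orbT.
move=> x; apply: (le_trans (hM x)); apply: ler_wpM2r => //.
by rewrite lecR le_max lexx.
Qed.

Lemma dset_lb (f : dualT) : has_lbound (dset (dv f)).
Proof. by exists (0:R) => M []. Qed.

Definition dnormR (f : dualT) : R := inf (dset (dv f)).

Lemma dnormR_ge0 f : 0 <= dnormR f.
Proof. by apply: lb_le_inf; [exact: dset_ne | move=> M []]. Qed.

Lemma dnormR_le f M : dset (dv f) M -> dnormR f <= M.
Proof. by move=> hM; apply: (ge_inf (dset_lb f)). Qed.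

Lemma dnormR_bound f x : `|dv f x| <= ((dnormR f)%:C)%C * `|x|.
Proof.
case: (dvP f) => lf _.
rewrite (normE x) (normKE (dv f x)) -realCM lecR.
set a := complex.Re `|dv f x|; set b := complex.Re `|x|.
have b0 : 0 <= b by apply: Re_ge0.
have a0 : 0 <= a by apply: Re_ge0.
have [bz|bp] := eqVneq b 0.
  have x0 : x = 0.
    by apply/normr0_eq0; rewrite normE -/b bz.
  by rewrite /a x0 lin0 // normr0 bz mulr0.
have bp' : 0 < b by rewrite lt_def bp b0.
rewrite -ler_pdivrMr //; apply: lb_le_inf; first exact: dset_ne.
move=> M [M0 hM]; rewrite ler_pdivrMr //.
by have := hM x; rewrite (normE x) (normKE (dv f x)) -realCM lecR.
Qed.

Definition dnorm (f : dualT) : K := ((dnormR f)%:C)%C.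

Lemma dnorm_normD f g : dnorm (f + g) <= dnorm f + dnorm g.
Proof.
rewrite /dnorm -realCD lecR; apply: dnormR_le; split.
  by apply: addr_ge0; apply: dnormR_ge0.
move=> x /=; rewrite realCD mulrDl; apply: (le_trans (ler_normD _ _)).
by apply: lerD; apply: dnormR_bound.
Qed.

Lemma dnormR_Zle k f : dnormR (k *: f) <= complex.Re `|k| * dnormR f.
Proof.
apply: dnormR_le; split.
  by apply: mulr_ge0; [apply: Re_ge0 | apply: dnormR_ge0].
move=> x /=; rewrite normrM realCM -normKE -mulrA.
by apply: ler_wpM2l => //; exact: dnormR_bound.
Qed.

Lemma dnorm_normZ (k : K) f : dnorm (k *: f) = `|k| * dnorm f.
Proof.
rewrite /dnorm (normKE k) -realCM; congr ((_ %:C)%C).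
apply/eqP; rewrite eq_le dnormR_Zle andTb.
have [->|k0] := eqVneq k 0.
  by rewrite normr0 /= mul0r dnormR_ge0.
have c0 : 0 < complex.Re `|k|.
  by rewrite -ltcR -normKE normr_gt0.
rewrite -ler_pdivlMl //.
have e : dnormR f = dnormR (k^-1 *: (k *: f)) by rewrite scalerA mulVf // scale1r.
rewrite e.
apply: (le_trans (dnormR_Zle k^-1 (k *: f))); apply: ler_wpM2r; first exact: dnormR_ge0.
rewrite -lecR realCV -!normKE normfV lexx //.
Qed.

Lemma dnorm0_eq0 f : dnorm f = 0 -> f = 0.
Proof.
move=> /complexI f0; apply: dual_ext; apply/funext => x /=.
apply/normr0_eq0/eqP; rewrite eq_le normr_ge0 andbT.
by have := dnormR_bound f x; rewrite f0 mul0r.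
Qed.

HB.instance Definition _ := Lmodule_isNormed.Build K dualT dnorm_normD dnorm_normZ dnorm0_eq0.

End DualT.

Lemma near2_set T (F : set_system T) (FF : Filter F) (P : T -> T -> Prop) :
  (\forall x & y \near F, P x y) ->
  exists S, F S /\ forall x y, S x -> S y -> P x y.
Proof.
case=> -[A B] /= [FA FB] ABP.
exists (A `&` B); split; first exact: filterI.
by move=> x y [Ax _] [_ By]; apply: (ABP (x, y)).
Qed.

Section RealNet.
Variable R : realType.
Lemma real_net_cvg (T : Type) (F : set_system T) (FF : ProperFilter F) (u : T -> R) :
  (forall e : R, 0 < e -> exists S, F S /\ forall f h, S f -> S h -> `|u f - u h| <= e) ->
  cvg (u @ F).
Proof.
move=> hu; apply: cauchy_cvg; apply/cauchy_ballP => e e0.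
have e20 : 0 < e / 2 by rewrite divr_gt0.
have [S [FS hS]] := hu _ e20.
rewrite near_map2; exists (S, S) => //= -[a b] /= [Sa Sb].
rewrite -ball_normE /ball_ /=.
apply: (le_lt_trans (hS _ _ Sa Sb)).
by rewrite ltr_pdivrMr // ltr_pMr // ltr1n.
Qed.
End RealNet.


Section DualComplete.
Variable R : realType.
Local Notation K := (R[i]).
Variable X : normedModType K.
Local Notation Y := (dualT X).

Lemma scaleK (k z : K) : k *: z = k * z.
Proof. by []. Qed.

Lemma ReIm_bound (z w : K) (c : R) : `|z - w| <= (c%:C)%C ->
  `|complex.Re z - complex.Re w| <= c /\ `|complex.Im z - complex.Im w| <= c.
Proof.
rewrite normKE lecR -ReB -ImB => h; split.
  exact: le_trans (Re_le_norm _) h.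
exact: le_trans (Im_le_norm _) h.
Qed.

Lemma dual_cauchy_real (F : set_system Y) (FF : ProperFilter F) : cauchy F ->
  forall e : R, 0 < e -> exists S, F S /\ forall f h, S f -> S h -> dnormR (f - h) <= e.
Proof.
move=> /cauchy_ballP Fc e e0.
have e0' : 0 < (e%:C)%C :> K by rewrite ltcR.
have [S [FS hS]] := near2_set _ (Fc _ e0').
exists S; split => // f h Sf Sh; have := hS f h Sf Sh.
rewrite -ball_normE /ball_ /= => /ltW H.
by rewrite -lecR; exact: H.
Qed.

Lemma dual_pw (F : set_system Y) (FF : ProperFilter F) : cauchy F ->
  forall e : R, 0 < e -> exists S, F S /\ forall f h, S f -> S h -> forall x,
    `|dv f x - dv h x| <= ((e * complex.Re `|x|)%:C)%C.
Proof.
move=> Fc e e0; have [S [FS hS]] := dual_cauchy_real FF Fc e0.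
exists S; split=> // f h Sf Sh x.
rewrite realCM -normE.
apply: (le_trans (dnormR_bound (f - h) x)); apply: ler_wpM2r => //.
by rewrite lecR; exact: hS.
Qed.

Lemma dual_complete (F : set_system Y) : ProperFilter F -> cauchy F -> cvg F.
Proof.
move=> FF Fc.
have pw := dual_pw FF Fc.
have bx : forall x : X, 0 < complex.Re `|x| + 1.
  by move=> x; apply: ltr_wpDl; [apply: Re_ge0 | exact: ltr01].
have cre : forall x, cvg ((fun f : Y => complex.Re (dv f x)) @ F).
  move=> x; apply: real_net_cvg => e e0.
  have e'0 : 0 < e / (complex.Re `|x| + 1) by rewrite divr_gt0.
  have [S [FS hS]] := pw _ e'0; exists S; split=> // f h Sf Sh.
  have [h1 _] := ReIm_bound (hS f h Sf Sh x).
  apply: (le_trans h1); rewrite mulrAC ler_pdivrMr // ler_pM2l //.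
  by rewrite lerDl ler01.
have cim : forall x, cvg ((fun f : Y => complex.Im (dv f x)) @ F).
  move=> x; apply: real_net_cvg => e e0.
  have e'0 : 0 < e / (complex.Re `|x| + 1) by rewrite divr_gt0.
  have [S [FS hS]] := pw _ e'0; exists S; split=> // f h Sf Sh.
  have [_ h1] := ReIm_bound (hS f h Sf Sh x).
  apply: (le_trans h1); rewrite mulrAC ler_pdivrMr // ler_pM2l //.
  by rewrite lerDl ler01.
pose lr x := lim ((fun f : Y => complex.Re (dv f x)) @ F).
pose li x := lim ((fun f : Y => complex.Im (dv f x)) @ F).
pose g x : K := (lr x +i* li x)%C.
have hB : forall e : R, 0 < e -> exists S, F S /\ forall f, S f -> forall x,
    `|dv f x - g x| <= (((e + e) * complex.Re `|x|)%:C)%C.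
  move=> e e0; have [S [FS hS]] := pw e e0; exists S; split=> // f Sf x.
  set b := complex.Re `|x|.
  have hr : `|complex.Re (dv f x) - lr x| <= e * b.
    have l1 : lr x <= complex.Re (dv f x) + e * b.
      apply: (cvgr_to_le (cre x)); apply: (filterS _ FS) => h Sh /=.
      have [h1 _] := ReIm_bound (hS f h Sf Sh x).
      move: h1; rewrite ler_norml => /andP[h1 h2]; lra.
    have l2 : complex.Re (dv f x) - e * b <= lr x.
      apply: (cvgr_to_ge (cre x)); apply: (filterS _ FS) => h Sh /=.
      have [h1 _] := ReIm_bound (hS f h Sf Sh x).
      move: h1; rewrite ler_norml => /andP[h1 h2]; lra.
    rewrite ler_norml; apply/andP; split; lra.
  have hi : `|complex.Im (dv f x) - li x| <= e * b.
    have l1 : li x <= complex.Im (dv f x) + e * b.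
      apply: (cvgr_to_le (cim x)); apply: (filterS _ FS) => h Sh /=.
      have [_ h1] := ReIm_bound (hS f h Sf Sh x).
      move: h1; rewrite ler_norml => /andP[h1 h2]; lra.
    have l2 : complex.Im (dv f x) - e * b <= li x.
      apply: (cvgr_to_ge (cim x)); apply: (filterS _ FS) => h Sh /=.
      have [_ h1] := ReIm_bound (hS f h Sf Sh x).
      move: h1; rewrite ler_norml => /andP[h1 h2]; lra.
    rewrite ler_norml; apply/andP; split; lra.
  rewrite /g ReImB; apply: (le_trans (norm_ReIm _ _)).
  by rewrite lecR mulrDl; apply: lerD.
have gex : forall e : R, 0 < e -> exists f : Y, forall x,
    `|dv f x - g x| <= (((e + e) * complex.Re `|x|)%:C)%C.
  move=> e e0; have [S [FS hS]] := hB e e0; have [f Sf] := filter_ex FS.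
  by exists f; exact: hS.
have glin : lin g.
  move=> k u v; rewrite !scaleK.
  set D := g (k *: u + v) - (k * g u + g v).
  suff : D = 0 by move/eqP; rewrite subr_eq0 => /eqP.
  set c := complex.Re `|k *: u + v| + complex.Re `|k| * complex.Re `|u| + complex.Re `|v|.
  have c0 : 0 <= c.
    by rewrite /c !addr_ge0 ?mulr_ge0 ?Re_ge0.
  have key : forall e : R, 0 < e -> complex.Re `|D| <= (e + e) * c.
    move=> e e0; have [f hf] := gex e e0.
    have lf := (dvP f).1.
    have -> : D = - (dv f (k *: u + v) - g (k *: u + v)) + k * (dv f u - g u)
                  + (dv f v - g v).
      by rewrite /D lf scaleK; ring.
    rewrite -lecR -normKE.
    have -> : (((e + e) * c)%:C)%C = (((e + e) * complex.Re `|k *: u + v|)%:C)%C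
        + `|k| * (((e + e) * complex.Re `|u|)%:C)%C + (((e + e) * complex.Re `|v|)%:C)%C.
      rewrite (normKE k) -!realCM -!realCD /c; congr ((_ %:C)%C); ring.
    apply: (le_trans (ler_normD _ _)); apply: lerD; last exact: hf.
    apply: (le_trans (ler_normD _ _)); apply: lerD; first by rewrite normrN; exact: hf.
    by rewrite normrM; apply: ler_wpM2l => //; exact: hf.
  set d := complex.Re `|D|.
  have d_ge0 : 0 <= d by apply: Re_ge0.
  have d0 : d <= 0.
    rewrite leNgt; apply/negP => dpos.
    have c1 : 0 < 4 * (c + 1) by apply: mulr_gt0 => //; apply: ltr_wpDl.
    set e := d / (4 * (c + 1)).
    have e0 : 0 < e by apply: divr_gt0.
    have he : e * (4 * (c + 1)) = d by rewrite /e divfK // gt_eqF.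
    have := key e e0; have : 0 <= e * c by apply: mulr_ge0 => //; exact: ltW.
    move=> ec h; nra.
  apply/normr0_eq0; rewrite normKE.
  have -> : complex.Re `|D| = 0 by apply/eqP; rewrite eq_le d0 d_ge0.
  by [].
have gb : exists M : R, forall x, `|g x| <= (M%:C)%C * `|x|.
  have [f hf] := gex 1 ltr01.
  exists (dnormR f + (1 + 1)) => x.
  have -> : g x = dv f x - (dv f x - g x) by ring.
  apply: (le_trans (ler_normB _ _)).
  rewrite realCD mulrDl; apply: lerD; first exact: dnormR_bound.
  by rewrite [X in _ <= _ * X]normE -realCM; exact: hf.
have gP : bounded_functional g by split.
pose G := DualT gP.
apply/cvg_ex; exists G.
change (id @ F --> G).
apply/cvgrPdist_le => eps eps0.
have eps1 : 0 < complex.Re eps by rewrite -ltcR -ge0_Re // ltW.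
have e0 : 0 < complex.Re eps / 2 by rewrite divr_gt0.
have [S [FS hS]] := hB _ e0.
apply: filterS FS => f Sf.
rewrite (ge0_Re (ltW eps0)).
change (((dnormR (G - f))%:C)%C <= ((complex.Re eps)%:C)%C).
rewrite lecR; apply: dnormR_le; split; first exact: ltW.
move=> x /=; rewrite distrC; apply: (le_trans (hS f Sf x)).
by rewrite [X in _ <= _ * X]normE -realCM lecR -splitr.
Qed.

End DualComplete.

Section DualInst.
Variable R : realType.
Variable X : normedModType R[i].
HB.instance Definition _ := Uniform_isComplete.Build (dualT X) (@dual_complete R X).
End DualInst.

Section ProdComplete.
Variable R : realType.
Local Notation K := (R[i]).
Variables (U V : completeNormedModType K).

Definition prodB := (U * V)%type.
HB.instance Definition _ := NormedModule.copy prodB ((U * V)%type : normedModType K).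

Lemma prod_complete (F : set_system prodB) : ProperFilter F -> cauchy F -> cvg F.
Proof.
move=> FF /cauchy_ballP Fb.
have c1 : cauchy (fst @ F).
  apply/cauchy_ballP => e e0; rewrite near_map2.
  by apply: filterS (Fb e e0) => -[[a b] [c d]] /= [].
have c2 : cauchy (snd @ F).
  apply/cauchy_ballP => e e0; rewrite near_map2.
  by apply: filterS (Fb e e0) => -[[a b] [c d]] /= [].
have l1 : cvg (fst @ F) by apply: cauchy_cvg.
have l2 : cvg (snd @ F) by apply: cauchy_cvg.
apply/cvg_ex; exists (lim (fst @ F), lim (snd @ F)).
have -> : F = (fun x => (x.1, x.2)) @ F.
  by apply/funext => P; rewrite /fmap /=; congr F; apply/funext => -[].
exact: cvg_pair.
Qed.

HB.instance Definition _ := Uniform_isComplete.Build prodB prod_complete.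
End ProdComplete.

Section DualBimod.
Variable R : realType.
Local Notation K := (R[i]).
Variables (A X : completeNormedModType K) (mulA : A -> A -> A).
Variables (l : A -> X -> X) (r : X -> A -> X).

Lemma bimod_C : banach_bimodule mulA l r -> exists C : R, 0 <= C /\ forall a x,
  `|l a x| <= (C%:C)%C * `|a| * `|x| /\ `|r x a| <= (C%:C)%C * `|a| * `|x|.
Proof.
case=> _ _ _ _ [C hC]; exists (Num.max C 0); split; first by rewrite le_max lexx orbT.
have le : forall z : K, 0 <= z -> (C%:C)%C * z <= ((Num.max C 0)%:C)%C * z.
  by move=> z z0; apply: ler_wpM2r => //; rewrite lecR le_max lexx.
move=> a x; have [h1 h2] := hC a x; split.
  by apply: (le_trans h1); rewrite -!mulrA; apply: le; rewrite mulr_ge0.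
by apply: (le_trans h2); rewrite -!mulrA; apply: le; rewrite mulr_ge0.
Qed.

Hypothesis hX : banach_bimodule mulA l r.

Lemma r_lin a : lin (fun x => r x a). Proof. by case: hX => -[_ [h _]]. Qed.
Lemma r_lin2 x : lin (fun a => r x a). Proof. by case: hX => -[_ [_ h]]. Qed.
Lemma l_lin a : lin (l a). Proof. by case: hX => -[[h _] _]. Qed.
Lemma l_lin2 x : lin (fun a => l a x). Proof. by case: hX => -[[_ h] _]. Qed.

Lemma bf_ldual a (f : dualT X) : bounded_functional (fun x => dv f (r x a)).
Proof.
have [C [C0 hC]] := bimod_C hX.
case: (dvP f) => lf _; split; first exact: lin_comp lf (r_lin a).
exists (dnormR f * (C * complex.Re `|a|)) => x.
apply: (le_trans (dnormR_bound f _)).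
rewrite !realCM -normE -mulrA; apply: ler_wpM2l; first by rewrite ler0c dnormR_ge0.
by case: (hC a x).
Qed.

Lemma bf_rdual a (f : dualT X) : bounded_functional (fun x => dv f (l a x)).
Proof.
have [C [C0 hC]] := bimod_C hX.
case: (dvP f) => lf _; split; first exact: lin_comp lf (l_lin a).
exists (dnormR f * (C * complex.Re `|a|)) => x.
apply: (le_trans (dnormR_bound f _)).
rewrite !realCM -normE -mulrA; apply: ler_wpM2l; first by rewrite ler0c dnormR_ge0.
by case: (hC a x).
Qed.

Definition ldual a f : dualT X := DualT (bf_ldual a f).
Definition rdual f a : dualT X := DualT (bf_rdual a f).

Lemma dual_bimodule : banach_bimodule mulA ldual rdual.
Proof.
have [C [C0 hC]] := bimod_C hX.
case: hX => _ hl hr hlr _.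
split.
- split; split.
  + by move=> a k f g; apply: dual_ext; apply/funext => x /=.
  + move=> f k a b; apply: dual_ext; apply/funext => x /=.
    by rewrite (r_lin2 x) ((dvP f).1).
  + by move=> a k f g; apply: dual_ext; apply/funext => x /=.
  + move=> f k a b; apply: dual_ext; apply/funext => x /=.
    by rewrite (l_lin2 x) ((dvP f).1).
- by move=> a b f; apply: dual_ext; apply/funext => x /=; rewrite hr.
- by move=> a b f; apply: dual_ext; apply/funext => x /=; rewrite hl.
- by move=> a b f; apply: dual_ext; apply/funext => x /=; rewrite hlr.
- exists C => a f; split.
  + change (((dnormR (ldual a f))%:C)%C <= (C%:C)%C * `|a| * ((dnormR f)%:C)%C).
    rewrite normE -!realCM lecR; apply: dnormR_le; split.
      by rewrite !mulr_ge0 ?Re_ge0 ?dnormR_ge0.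
    move=> x /=; apply: (le_trans (dnormR_bound f _)).
    have [_ h] := hC a x; rewrite !realCM -normE.
    have -> : (C%:C)%C * `|a| * ((dnormR f)%:C)%C * `|x| =
              ((dnormR f)%:C)%C * ((C%:C)%C * `|a| * `|x|) by ring.
    by apply: ler_wpM2l => //; apply: realC_ge0; exact: dnormR_ge0.
  + change (((dnormR (rdual f a))%:C)%C <= (C%:C)%C * `|a| * ((dnormR f)%:C)%C).
    rewrite normE -!realCM lecR; apply: dnormR_le; split.
      by rewrite !mulr_ge0 ?Re_ge0 ?dnormR_ge0.
    move=> x /=; apply: (le_trans (dnormR_bound f _)).
    have [h _] := hC a x; rewrite !realCM -normE.
    have -> : (C%:C)%C * `|a| * ((dnormR f)%:C)%C * `|x| =
              ((dnormR f)%:C)%C * ((C%:C)%C * `|a| * `|x|) by ring.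
    by apply: ler_wpM2l => //; apply: realC_ge0; exact: dnormR_ge0.
Qed.

End DualBimod.

Section MaxK.
Variable R : realType.
Local Notation K := (R[i]).
Lemma max_leK (x y z : K) : 0 <= x -> 0 <= y -> x <= z -> y <= z -> Num.max x y <= z.
Proof.
move=> x0 y0 xz yz; rewrite comparable_ge_max ?xz ?yz //.
by apply: real_comparable; apply: ger0_real.
Qed.
Lemma le_max1K (x y : K) : 0 <= x -> 0 <= y -> x <= Num.max x y.
Proof.
move=> x0 y0; rewrite comparable_le_max ?lexx //.
by apply: real_comparable; apply: ger0_real.
Qed.
Lemma le_max2K (x y : K) : 0 <= x -> 0 <= y -> y <= Num.max x y.
Proof.
move=> x0 y0; rewrite comparable_le_max ?lexx ?orbT //.
by apply: real_comparable; apply: ger0_real.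
Qed.
End MaxK.

Section Tri.
Variable R : realType.
Local Notation K := (R[i]).
Variables (A Y : completeNormedModType K) (mulA : A -> A -> A).
Variables (l : A -> Y -> Y) (r : Y -> A -> Y).
Hypotheses (hA : banach_algebra mulA) (hY : banach_bimodule mulA l r).
Local Notation B := (prodB A Y).

Lemma normB (u : B) : `|u| = Num.max `|u.1| `|u.2|.
Proof. by []. Qed.

Lemma norm1B (u : B) : `|u.1| <= `|u|.
Proof. by rewrite normB; apply: le_max1K. Qed.
Lemma norm2B (u : B) : `|u.2| <= `|u|.
Proof. by rewrite normB; apply: le_max2K. Qed.
Lemma norm0yB (y : Y) : `|((0, y) : B)| = `|y|.
Proof.
apply/eqP; rewrite eq_le; apply/andP; split; last exact: (norm2B (0, y)).
by rewrite normB /=; apply: max_leK; rewrite ?normr0 ?lexx.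
Qed.

Lemma scaleB1 (k : K) (u : B) : (k *: u).1 = k *: u.1. Proof. by []. Qed.
Lemma scaleB2 (k : K) (u : B) : (k *: u).2 = k *: u.2. Proof. by []. Qed.
Lemma addB1 (u v : B) : (u + v).1 = u.1 + v.1. Proof. by []. Qed.
Lemma addB2 (u v : B) : (u + v).2 = u.2 + v.2. Proof. by []. Qed.

Definition m0 (u v : B) : B := (mulA u.1 v.1, l u.1 v.2 + r u.2 v.1).

Lemma mAl u : lin (mulA u). Proof. by case: hA => -[h _]. Qed.
Lemma mAr v : lin (fun u => mulA u v). Proof. by case: hA => -[_ h]. Qed.
Lemma assA : associative mulA. Proof. by case: hA. Qed.

Lemma pair_ext (p q : B) : p.1 = q.1 -> p.2 = q.2 -> p = q.
Proof. by case: p; case: q => ? ? ? ? /= -> ->. Qed.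

Lemma m0_1 u v : (m0 u v).1 = mulA u.1 v.1. Proof. by []. Qed.
Lemma m0_2 u v : (m0 u v).2 = l u.1 v.2 + r u.2 v.1. Proof. by []. Qed.

Lemma m0_lin2 u : lin (m0 u).
Proof.
move=> k v w; apply: pair_ext.
  by rewrite addB1 scaleB1 !m0_1 addB1 scaleB1 mAl.
rewrite addB2 scaleB2 !m0_2 addB2 scaleB2 addB1 scaleB1.
rewrite (l_lin hY) (r_lin2 hY) scalerDr.
by rewrite -!addrA; congr (_ + _); rewrite addrCA.
Qed.

Lemma m0_lin1 v : lin (fun u => m0 u v).
Proof.
move=> k u w; apply: pair_ext.
  by rewrite addB1 scaleB1 !m0_1 addB1 scaleB1 mAr.
rewrite addB2 scaleB2 !m0_2 addB2 scaleB2 addB1 scaleB1.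
rewrite (l_lin2 hY) (r_lin hY) scalerDr.
by rewrite -!addrA; congr (_ + _); rewrite addrCA.
Qed.

Lemma m0_assoc : associative m0.
Proof.
case: hY => _ hl hr hlr _.
move=> u v w; apply: pair_ext; first by rewrite !m0_1 assA.
rewrite !m0_2 !m0_1 ?m0_2 hl (linD (r_lin hY _)) (linD (l_lin hY _)) hlr hr.
by rewrite !addrA.
Qed.


Lemma m0_bound : exists s : R, 0 < s /\ forall u v, `|m0 u v| <= (s%:C)%C * `|u| * `|v|.
Proof.
have [C [C0 hC]] := bimod_C hY.
have nA : forall x y, `|mulA x y| <= `|x| * `|y| by case: hA.
exists (1 + (C + C)); split; first lra.
move=> u v.
have uv0 : 0 <= `|u| * `|v| by rewrite mulr_ge0.
have key : forall t : R, t <= 1 + (C + C) -> (t%:C)%C * `|u| * `|v| <= ((1 + (C + C))%:C)%C * `|u| * `|v|.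
  by move=> t ht; rewrite -!mulrA; apply: ler_wpM2r => //; rewrite lecR.
rewrite normB; apply: max_leK => //.
  rewrite m0_1; apply: (le_trans (nA _ _)); apply: (le_trans _ (key 1 _)); last lra.
  by rewrite realC1 mul1r; apply: ler_pM => //; [exact: norm1B | exact: norm1B].
rewrite m0_2; apply: (le_trans (ler_normD _ _)); apply: (le_trans _ (key (C + C) _)); last lra.
rewrite realCD -!mulrA mulrDl; apply: lerD.
  have [h _] := hC u.1 v.2; apply: (le_trans h); rewrite -mulrA; apply: ler_wpM2l.
    by apply: realC_ge0.
  by apply: ler_pM => //; [exact: norm1B | exact: norm2B].
have [_ h] := hC v.1 u.2; apply: (le_trans h); rewrite -mulrA; apply: ler_wpM2l.
  by apply: realC_ge0.
rewrite mulrC; by apply: ler_pM => //; [exact: norm2B | exact: norm1B].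
Qed.

Variable s : R.
Hypothesis s0 : 0 < s.
Hypothesis hs : forall u v, `|m0 u v| <= (s%:C)%C * `|u| * `|v|.
Local Notation sC := ((s%:C)%C : K).

Lemma sC_gt0 : 0 < sC. Proof. by rewrite ltcR. Qed.
Lemma sC0 : sC != 0. Proof. by rewrite gt_eqF // sC_gt0. Qed.

Definition mulT (u v : B) : B := sC^-1 *: m0 u v.
Definition phiT (a : A) : B := (sC *: a, 0).

Lemma mulT_ba : banach_algebra mulT.
Proof.
split.
- split.
  + by move=> u k v w; rewrite /mulT m0_lin2 scalerDr !scalerA mulrC.
  + by move=> v k u w; rewrite /mulT m0_lin1 scalerDr !scalerA mulrC.
- by move=> u v w; rewrite /mulT (linZ (m0_lin1 w)) (linZ (m0_lin2 u)) m0_assoc.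
- move=> u v; rewrite /mulT normrZ ger0_norm; last by rewrite invr_ge0 ltW // sC_gt0.
  apply: (le_trans (ler_wpM2l _ (hs u v))); first by rewrite invr_ge0 ltW // sC_gt0.
  by rewrite !mulrA mulVf ?sC0 // mul1r.
Qed.

Lemma mulT_phi_l a u : mulT (phiT a) u = (mulA a u.1, l a u.2).
Proof.
apply: pair_ext.
  by rewrite scaleB1 m0_1 /= (linZ (mAr _)) scalerA mulVf ?sC0 // scale1r.
rewrite scaleB2 m0_2 /= (linZ (l_lin2 hY _)) (lin0 (r_lin hY _)) addr0.
by rewrite scalerA mulVf ?sC0 // scale1r.
Qed.

Lemma mulT_phi_r u a : mulT u (phiT a) = (mulA u.1 a, r u.2 a).
Proof.
apply: pair_ext.
  by rewrite scaleB1 m0_1 /= (linZ (mAl _)) scalerA mulVf ?sC0 // scale1r.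
rewrite scaleB2 m0_2 /= (linZ (r_lin2 hY _)) (lin0 (l_lin hY _)) add0r.
by rewrite scalerA mulVf ?sC0 // scale1r.
Qed.

Lemma phiT_lin : lin phiT.
Proof.
move=> k a b; apply: pair_ext.
  by rewrite addB1 scaleB1 /= scalerDr !scalerA mulrC.
by rewrite addB2 scaleB2 /= scaler0 addr0.
Qed.

Lemma phiT_hom a b : phiT (mulA a b) = mulT (phiT a) (phiT b).
Proof.
rewrite mulT_phi_l; apply: pair_ext => /=.
  by rewrite (linZ (mAl _)).
by rewrite (lin0 (l_lin hY _)).
Qed.

Lemma phiT_inj : injective phiT.
Proof. by move=> a b /(congr1 fst) /= /(scalerI sC0). Qed.

Lemma phiT_cont : continuous phiT.
Proof.
move=> a.
have h1 : (fun x : A => sC *: x) @ a --> sC *: a by apply: scaler_continuous.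
have h2 : (fun _ : A => (0:Y)) @ a --> (0:Y) by apply: cvg_cst.
exact: (cvg_pair h1 h2).
Qed.

Lemma phiT_hom' : cont_hom mulA mulT phiT.
Proof. split; [exact: phiT_lin | exact: phiT_hom | exact: phiT_cont]. Qed.

End Tri.

Section Main.
Variable R : realType.
Local Notation K := (R[i]).
Variables (A : completeNormedModType K) (mulA : A -> A -> A).
Hypothesis hA : banach_algebra mulA.

Lemma nonnegC (U V : normedModType K) (f : U -> V -> K) :
  (exists C : R, forall a x, `|f a x| <= (C%:C)%C * `|a| * `|x|) ->
  exists C : R, 0 <= C /\ forall a x, `|f a x| <= (C%:C)%C * `|a| * `|x|.
Proof.
case=> C hC; exists (Num.max C 0); split; first by rewrite le_max lexx orbT.
move=> a x; apply: (le_trans (hC a x)); rewrite -!mulrA; apply: ler_wpM2r.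
  by rewrite mulr_ge0.
by rewrite lecR le_max lexx.
Qed.

Definition P4 := forall (B : completeNormedModType R[i]) (mulB : B -> B -> B) (phi : A -> B),
      banach_algebra mulB -> cont_hom mulA mulB phi -> injective phi ->
      forall D : A -> B -> R[i],
        dual_derivation mulA (lact_phi mulB phi) (ract_phi mulB phi) D ->
        (forall a b, D a (phi b) + D b (phi a) = 0) ->
        dual_inner (lact_phi mulB phi) (ract_phi mulB phi) D.

Lemma iv_i : P4 -> amenable mulA.
Proof.
move=> h X l r hX D hD.
have [s [s0 hs]] := m0_bound hA hX.
case: hD => hlin hlin2 hb hder.
have [C [C0 hC]] := nonnegC hb.
pose d (a : A) (u : prodB A X) := D a u.2.
have hd : dual_derivation mulA (lact_phi (mulT mulA l r s) (phiT X s))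
                                (ract_phi (mulT mulA l r s) (phiT X s)) d.
  split.
  - by move=> a k u w; rewrite /d addB2 scaleB2 hlin.
  - by move=> k a b u; rewrite /d hlin2.
  - exists C => a u; rewrite /d; apply: (le_trans (hC a u.2)); apply: ler_wpM2l.
      by rewrite mulr_ge0 ?realC_ge0.
    exact: norm2B.
  - move=> a b u; rewrite /d /lact_phi /ract_phi.
    rewrite (mulT_phi_l hA hX s0) (mulT_phi_r hA hX s0) /=; exact: hder.
have hc : forall a b, d a (phiT X s b) + d b (phiT X s a) = 0.
  by move=> a b; rewrite /d /= !(lin0 (hlin _)) addr0.
have [F [[lF [M hM]] hFi]] := h _ _ _ (mulT_ba hA hX s0 hs) (phiT_hom' hA hX s0)
                                (phiT_inj s0) d hd hc.
exists (fun y => F (0, y)); split.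
  split.
    move=> k y z; rewrite -lF; congr F; apply: pair_ext => /=.
      by rewrite scaler0 addr0.
    by [].
  by exists M => y; apply: (le_trans (hM _)); rewrite norm0yB.
move=> a x; have := hFi a (0, x).
rewrite /d /= /lact_phi /ract_phi (mulT_phi_l hA hX s0) (mulT_phi_r hA hX s0) /=.
by rewrite (lin0 (mAr hA _)) (lin0 (mAl hA _)).
Qed.


Definition P5 := forall (B : completeNormedModType R[i]) (mulB : B -> B -> B) (phi : A -> B),
      banach_algebra mulB -> cont_hom mulA mulB phi -> injective phi ->
      H1_bidual_trivial mulA (lact_phi mulB phi) (ract_phi mulB phi).

Lemma i_v : amenable mulA -> P5.
Proof.
move=> am B mulB phi hB hphi _ D hD.
have hX := Bphi_bimodule hB hphi.
pose D' (a : A) (f : dualT B) := D a (dv f).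
case: hD => hel hlin2 hb hder.
have hD' : dual_derivation mulA (ldual hX) (rdual hX) D'.
  split.
  - move=> a k f g; rewrite /D'; exact: (hel a).1 k (dv f) (dv g) (dvP f) (dvP g).
  - by move=> k a b f; rewrite /D' hlin2 //; exact: dvP.
  - case: hb => C hC; exists C => a f; rewrite /D'.
    apply: hC; [exact: (dvP f).1 | exact: dnormR_ge0 | exact: dnormR_bound].
  - by move=> a b f; rewrite /D' hder //; exact: dvP.
have [G [[lG hMG0] hGi]] := am _ _ _ (dual_bimodule hX) D' hD'.
have [MG [MG0 hMG]] : exists M : R, 0 <= M /\ forall y, `|G y| <= (M%:C)%C * `|y|.
  case: hMG0 => M hM; exists (Num.max M 0); split; first by rewrite le_max lexx orbT.
  move=> y; apply: (le_trans (hM y)); apply: ler_wpM2r => //.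
  by rewrite lecR le_max lexx.
pose F (h : B -> K) : K :=
  if pselect (bounded_functional h) is left p then G (DualT p) else 0.
have Fval : forall h (p : bounded_functional h), F h = G (DualT p).
  move=> h p; rewrite /F; case: pselect => [p'|np]; last by case: np.
  by congr G; apply: dual_ext.
exists F; split.
- split.
  + move=> k f g pf pg; rewrite (Fval _ (bfD (bfZ k pf) pg)) (Fval _ pf) (Fval _ pg).
    transitivity (G (k *: DualT pf + DualT pg)); first by congr G; apply: dual_ext.
    exact: lG.
  + exists MG => f M lf M0 hf.
    have pf : bounded_functional f by split; [exact: lf | exists M].
    rewrite (Fval _ pf); apply: (le_trans (hMG _)).
    apply: ler_wpM2l; first exact: realC_ge0.
    change (((dnormR (DualT pf))%:C)%C <= (M%:C)%C); rewrite lecR.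
    by apply: dnormR_le; split.
- move=> a f pf.
  rewrite (Fval _ (bf_rdual hX a (DualT pf))) (Fval _ (bf_ldual hX a (DualT pf))).
  by have := hGi a (DualT pf); rewrite /D' /= => ->.
Qed.

Lemma v_i : P5 -> amenable mulA.
Proof.
move=> h X l r hX D hD.
have hY := dual_bimodule hX.
have [s [s0 hs]] := m0_bound hA hY.
case: hD => hlin hlin2 hb hder.
have [C [C0 hC]] := nonnegC hb.
have pf : forall a, bounded_functional (D a).
  move=> a; split; first exact: hlin.
  exists (C * complex.Re `|a|) => x; rewrite realCM -normE; exact: hC.
pose Dy a : dualT X := DualT (pf a).
have DyE : forall a, dnormR (Dy a) <= C * complex.Re `|a|.
  move=> a; apply: dnormR_le; split; first by rewrite mulr_ge0 ?Re_ge0.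
  by move=> x; rewrite realCM -normE; exact: hC.
pose Dd (a : A) (h : prodB A (dualT X) -> K) := h (0, Dy a).
pose mT := mulT mulA (ldual hX) (rdual hX) s.
pose pT := @phiT _ A (dualT X) s.
have hDd : bidual_derivation mulA (lact_phi mT pT) (ract_phi mT pT) Dd.
  split.
  - move=> a; split; first by [].
    exists (dnormR (Dy a)) => f M lf M0 hf; rewrite /Dd.
    apply: (le_trans (hf _)); rewrite norm0yB mulrC.
    by [].
  - move=> k a b f [lf _]; rewrite /Dd.
    have -> : ((0, Dy (k *: a + b)) : prodB A (dualT X)) = k *: (0, Dy a) + (0, Dy b).
      apply: pair_ext; first by rewrite addB1 scaleB1 /= scaler0 addr0.
      by rewrite addB2 scaleB2 /=; apply: dual_ext; apply/funext => x /=; rewrite hlin2.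
    by rewrite lf.
  - exists C => a f M lf M0 hf; rewrite /Dd.
    apply: (le_trans (hf _)); rewrite norm0yB.
    rewrite mulrC; apply: ler_wpM2r; first exact: realC_ge0.
    change (((dnormR (Dy a))%:C)%C <= (C%:C)%C * `|a|).
    by rewrite normE -realCM lecR; exact: DyE.
  - move=> a b f [lf _]; rewrite /Dd /lact_phi /ract_phi /mT /pT.
    rewrite (mulT_phi_l hA hY s0) (mulT_phi_r hA hY s0) /=.
    rewrite -(linD lf); congr f; apply: pair_ext.
      by rewrite addB1 /= (lin0 (mAr hA _)) (lin0 (mAl hA _)) addr0.
    by rewrite addB2 /=; apply: dual_ext; apply/funext => x /=; rewrite hder.
have [F [[lF [CF hCF]] hFi]] := h _ mT pT (mulT_ba hA hY s0 hs) (phiT_hom' hA hY s0)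
                                  (phiT_inj s0) Dd hDd.
pose ev (x : X) (u : prodB A (dualT X)) : K := dv u.2 x.
have evB : forall x u, `|ev x u| <= ((complex.Re `|x|)%:C)%C * `|u|.
  move=> x u; rewrite /ev -normE mulrC.
  apply: (le_trans (dnormR_bound u.2 x)); apply: ler_wpM2r => //.
  exact: (norm2B u).
have evP : forall x, bounded_functional (ev x).
  move=> x; split; first by move=> k u w; rewrite /ev addB2 scaleB2.
  by exists (complex.Re `|x|); exact: evB.
exists (fun x => F (ev x)); split.
  split.
    move=> k x y; transitivity (F (fun u => k * ev x u + ev y u)).
      by congr F; apply/funext => u; rewrite /ev; exact: (dvP u.2).1.
    by apply: lF; apply: evP.
  exists CF => x; rewrite [X in _ <= _ * X]normE.
  by apply: hCF; [exact: (evP x).1 | exact: Re_ge0 | exact: evB].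
move=> a x.
transitivity (Dd a (ev x)); first by [].
rewrite (hFi a (ev x) (evP x)); congr (F _ - F _); apply/funext => u;
  rewrite /ev /lact_phi /ract_phi /mT /pT.
  by rewrite (mulT_phi_l hA hY s0).
by rewrite (mulT_phi_r hA hY s0).
Qed.

End Main.

Unset Implicit Arguments. Set Strict Implicit.
Local Close Scope classical_set_scope.
Theorem theorem2p1 (R : realType) (A : completeNormedModType R[i])
  (mulA : A -> A -> A) (hA : banach_algebra mulA) :
  [<->
   (* (i) *) amenable mulA;
   (* (ii) *)
   (forall (B : completeNormedModType R[i]) (mulB : B -> B -> B) (phi : A -> B),
      banach_algebra mulB -> cont_hom mulA mulB phi ->
      H1_dual_trivial mulA (lact_phi mulB phi) (ract_phi mulB phi));
   (* (iii) *)
   (forall (B : completeNormedModType R[i]) (mulB : B -> B -> B) (phi : A -> B),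
      banach_algebra mulB -> cont_hom mulA mulB phi -> injective phi ->
      H1_dual_trivial mulA (lact_phi mulB phi) (ract_phi mulB phi));
   (* (iv) *)
   (forall (B : completeNormedModType R[i]) (mulB : B -> B -> B) (phi : A -> B),
      banach_algebra mulB -> cont_hom mulA mulB phi -> injective phi ->
      forall D : A -> B -> R[i],
        dual_derivation mulA (lact_phi mulB phi) (ract_phi mulB phi) D ->
        (forall a b, D a (phi b) + D b (phi a) = 0) ->
        dual_inner (lact_phi mulB phi) (ract_phi mulB phi) D);
   (* (v) *)
   (forall (B : completeNormedModType R[i]) (mulB : B -> B -> B) (phi : A -> B),
      banach_algebra mulB -> cont_hom mulA mulB phi -> injective phi ->
      H1_bidual_trivial mulA (lact_phi mulB phi) (ract_phi mulB phi))].
Proof.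
tfae.
- move=> am B mulB phi hB hphi; apply: am; exact: Bphi_bimodule.
- by move=> h B mulB phi hB hphi _; exact: h.
- by move=> h B mulB phi hB hphi inj D hD _; exact: h hB hphi inj D hD.
- by move=> h4; exact: (i_v (iv_i hA h4)).
- exact: (v_i hA).
Qed.
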